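(* Let $(E,C)$ be a separated graph with $E^0,E^1$ countable, in which all edges have the same source $v_0$, the range map is injective and $E$ has no loops; let $S\subseteq C_{fin}$ and $K$ a field. Then the representation $\pi:AL_K(E,C,S)\to\mathrm{Hom}_K(M)$ arising from a branching system obtained by the construction described in the context is faithful (injective).
   Context: A separated graph is a pair $(E,C)$ where $E=(E^0,E^1,r,s)$ is a directed graph and $C=\bigcup_{v\in E^0}C_v$, where for each non-sink $v$, $C_v$ is a partition of $s^{-1}(v)$ into pairwise disjoint nonempty sets; $C_{fin}$ is the set of finite $Y\in C$. The Cohn-Leavitt algebra $L_K(E,C,S)$ is the universal $K$-algebra generated by pairwise orthogonal idempotents $\{v:v\in E^0\}$ and elements $\{e,e^*:e\in E^1\}$ subject to: $s(e)e=er(e)=e$; $r(e)e^*=e^*s(e)=e^*$; $e^*f=\delta_{e,f}r(e)$ for $e,f\in Y$, $Y\in C$; $v=\sum_{e\in X}ee^*$ for every $X\in S\cap C_v$, $v$ non-sink. The abelianized Cohn-Leavitt algebra $AL_K(E,C,S)$ is the quotient of $L_K(E,C,S)$ by the ideal generated by all $\lambda\lambda^*\beta\beta^*-\beta\beta^*\lambda\lambda^*$ with $\lambda,\beta$ in the multiplicative semigroup generated by $E^1\cup(E^1)^*$. Construction of the branching system: enumerate $E^0=\{w_0,w_1,\dots\}$ and put $D_{w_i}=[i,i+1)\subseteq\mathbb{R}$, $\mathfrak{X}=\bigcup_i D_{w_i}$. For each non-sink $v$ enumerate $C_v=\{Y_1,Y_2,\dots\}$ and let $\widetilde{Y_j}=Y_j\cup\{\text{one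 extra symbol}\}$ if $Y_j\notin S$ and $\widetilde{Y_j}=Y_j$ if $Y_j\in S$. Partition $D_v$ into $|\widetilde{Y_1}|$ left-closed right-open intervals indexed by $\widetilde{Y_1}$, and for $e\in Y_1$ let $R_e$ be the interval indexed by $e$. Inductively, given the (countable) partition of $D_v$ into left-closed right-open intervals obtained at stage $n$, partition each of its intervals into $|\widetilde{Y_{n+1}}|$ left-closed right-open intervals indexed by $\widetilde{Y_{n+1}}$, and for $e\in Y_{n+1}$ let $R_e$ be the union of all subintervals indexed by $e$. For each $e\in E^1$, $R_e$ is a disjoint union of countably many left-closed right-open intervals $\{J_k\}_{k\in\Delta}$; partition $D_{r(e)}$ into $|\Delta|$ left-closed right-open intervals $\{D_k\}_{k\in\Delta}$, choose bijections $D_k\to J_k$, and let $f_e:D_{r(e)}\to R_e$ be the resulting bijection. $M$ is the $K$-module of all functions $\mathfrak{X}\to K$, and $\pi$ is the algebra homomorphism (well defined on $AL_K(E,C,S)$) determined by $\pi(v)\phi=\chi_{D_v}\phi$, $\pi(e)\phi=$ the function equal to $\phi(f_e^{-1}(x))$ on $R_e$ and $0$ elsewhere, $\pi(e^* )\phi=$ the function equal to $\phi(f_e(x))$ on $D_{r(e)}$ and $0$ elsewhere. *)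

(* Defs.v *)
From HB Require Import structures.
From mathcomp Require Import all_boot all_order all_algebra.
From Stdlib Require Import Reals ClassicalEpsilon.

Set Implicit Arguments.
Unset Strict Implicit.
Unset Printing Implicit Defensive.

Import GRing.Theory.
Local Open Scope ring_scope.

(* The partition C is given by a labelling [cl : Ed -> Cl]: the sets of *)
(* C are the (nonempty) fibres of [cl] (cl is required surjective) and  *)
(* each fibre lies in s^{-1}(v) for a single v (so it belongs to C_v).  *)
Record sepgraph (V Ed Cl : Type) := SepGraph {
  src : Ed -> V;
  rng : Ed -> V;
  cl  : Ed -> Cl }.

Definition is_sepgraph (V Ed Cl : Type) (G : sepgraph V Ed Cl) : Prop :=
  (forall Y : Cl, exists e, cl G e = Y) /\
  (forall e e' : Ed, cl G e = cl G e' -> src G e = src G e').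

Definition fin_block (V Ed : Type) (Cl : Type) (G : sepgraph V Ed Cl)
  (Y : Cl) : Prop :=
  exists l : list Ed, forall e, cl G e = Y <-> List.In e l.

Inductive gen (V Ed : Type) := GV of V | GE of Ed | GS of Ed.

(* a formal noncommutative polynomial without constant term:            *)
(* a finite list of (coefficient, nonempty word in the generators).     *)
Definition ncpoly (K : Type) (V Ed : Type) := seq (K * seq (gen V Ed)).

Definition no_const_term (K V Ed : Type) (p : ncpoly K V Ed) : bool :=
  all (fun cw => ~~ nilp cw.2) p.

Section Interp.
Variables (K : fieldType) (A : algType K) (V Ed : Type).
Variables (gv : V -> A) (ge gs : Ed -> A).

Definition interp_gen (g : gen V Ed) : A :=
  match g with GV v => gv v | GE e => ge e | GS e => gs e end.

Definition interp_poly (p : ncpoly K V Ed) : A :=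
  \sum_(cw <- p) cw.1 *: \prod_(g <- cw.2) interp_gen g.

(* paths: words in E^1 ∪ (E^1)^*; (true, e) = e, (false, e) = e^*. *)
Definition interp_path (l : seq (bool * Ed)) : A :=
  \prod_(x <- l) (if x.1 then ge x.2 else gs x.2).
End Interp.

Definition path_star (Ed : Type) (l : seq (bool * Ed)) : seq (bool * Ed) :=
  rev (map (fun x => (~~ x.1, x.2)) l).

Definition AL_model (K : fieldType) (A : algType K) (V : eqType)
  (Ed : eqType) (Cl : Type) (G : sepgraph V Ed Cl) (S : Cl -> Prop)
  (gv : V -> A) (ge gs : Ed -> A) : Prop :=
  (forall v, gv v * gv v = gv v) /\
  (forall v w, v != w -> gv v * gv w = 0) /\
  (forall e, gv (src G e) * ge e = ge e) /\
  (forall e, ge e * gv (rng G e) = ge e) /\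
  (forall e, gv (rng G e) * gs e = gs e) /\
  (forall e, gs e * gv (src G e) = gs e) /\
  (forall e f, cl G e = cl G f ->
     gs e * ge f = (if e == f then gv (rng G e) else 0)) /\
  (forall (Y : Cl), S Y -> forall l : seq Ed, uniq l ->
     (forall e, (e \in l) <-> cl G e = Y) ->
     forall e0, cl G e0 = Y ->
       gv (src G e0) = \sum_(e <- l) ge e * gs e) /\
  (forall lam bet : seq (bool * Ed), lam != [::] -> bet != [::] ->
     interp_path ge gs lam * interp_path ge gs (path_star lam)
       * interp_path ge gs bet * interp_path ge gs (path_star bet)
     = interp_path ge gs bet * interp_path ge gs (path_star bet)
       * interp_path ge gs lam * interp_path ge gs (path_star lam)).

(* p = 0 in AL_K(E,C,S): by the universal property, p vanishes in every  *)
(* (unital; AL embeds in its unitization) K-algebra model of the relations *)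
Definition zero_in_AL (K : fieldType) (V Ed : eqType) (Cl : Type)
  (G : sepgraph V Ed Cl) (S : Cl -> Prop) (p : ncpoly K V Ed) : Prop :=
  forall (A : algType K) (gv : V -> A) (ge gs : Ed -> A),
    AL_model G S gv ge gs -> interp_poly gv ge gs p = 0.

Definition Dv (V : Type) (idx : V -> nat) (v : V) : R -> Prop :=
  fun x => Rle (INR (idx v)) x /\ Rlt x (Rplus (INR (idx v)) R1).

Definition lcro (J : R -> Prop) : Prop :=
  exists a b, Rlt a b /\ forall x, J x <-> (Rle a x /\ Rlt x b).

Definition lcro_partition (I : Type) (P : I -> Prop) (J : I -> R -> Prop)
  (D : R -> Prop) : Prop :=
  (forall i, P i -> lcro (J i)) /\
  (forall i j x, P i -> P j -> J i x -> J j x -> i = j) /\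
  (forall x, D x <-> exists i, P i /\ J i x).

(* data produced by the construction:
   - idx : the enumeration E^0 = {w_0, w_1, ...} (w_{idx v} = v);
   - bidx : the enumeration C_v = {Y_1, Y_2, ...} (Y = Y_{bidx Y + 1});
   - itv v t : the interval of D_v at stage (size t) with address
     t = [t_1; ...; t_n], t_j in Ytilde_j (Some e = e, None = extra symbol);
   - dk e t : the intervals D_k partitioning D_{r(e)};
   - fe e = f_e, ge e = its inverse R_e -> D_{r(e)}. *)
Record bdata (V Ed Cl : Type) := BData {
  idx  : V -> nat;
  bidx : Cl -> nat;
  itv  : V -> seq (option Ed) -> R -> Prop;
  dk   : Ed -> seq (option Ed) -> R -> Prop;
  fe   : Ed -> R -> R;
  gi   : Ed -> R -> R }.

Section Construction.
Variables (V Ed Cl : Type) (G : sepgraph V Ed Cl) (S : Cl -> Prop)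
  (B : bdata V Ed Cl).

(* t is an address at vertex v: its j-th entry lies in Ytilde_{j+1} *)
Definition valid_addr (v : V) (t : seq (option Ed)) : Prop :=
  forall j : nat, leq j.+1 (size t) ->
    match nth None t j with
    | Some e => src G e = v /\ bidx B (cl G e) = j
    | None => exists e, src G e = v /\ bidx B (cl G e) = j /\ ~ S (cl G e)
    end.

Definition Re (e : Ed) : R -> Prop := fun x =>
  exists t, valid_addr (src G e) t /\ size t = bidx B (cl G e) /\
            itv B (src G e) (rcons t (Some e)) x.

Definition is_construction : Prop :=
  (forall v w, idx B v = idx B w -> v = w) /\
  (forall v (n : nat), leq n.+1 (idx B v) -> exists w, idx B w = n) /\
  (forall e e', src G e = src G e' -> bidx B (cl G e) = bidx B (cl G e') ->
     cl G e = cl G e') /\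
  (forall e (j : nat), leq j.+1 (bidx B (cl G e)) ->
     exists e', src G e' = src G e /\ bidx B (cl G e') = j) /\
  (forall v x, itv B v [::] x <-> Dv (idx B) v x) /\
  (forall v t, valid_addr v t ->
     (exists e, src G e = v /\ bidx B (cl G e) = size t) ->
     lcro_partition (fun a => valid_addr v (rcons t a))
                    (fun a => itv B v (rcons t a)) (itv B v t)) /\
  (forall e, lcro_partition
     (fun t => valid_addr (src G e) t /\ size t = bidx B (cl G e))
     (dk B e) (Dv (idx B) (rng G e))) /\
  (forall e t, valid_addr (src G e) t -> size t = bidx B (cl G e) ->
     (forall x, dk B e t x -> itv B (src G e) (rcons t (Some e)) (fe B e x)) /\
     (forall x, dk B e t x -> gi B e (fe B e x) = x) /\
     (forall y, itv B (src G e) (rcons t (Some e)) y ->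
        dk B e t (gi B e y) /\ fe B e (gi B e y) = y)).

Definition Xsp : R -> Prop := fun x => exists v, Dv (idx B) v x.

Definition chi (P : R -> Prop) (x : R) : bool :=
  if excluded_middle_informative (P x) then true else false.

Variable K : fieldType.

(* the representation pi on generators, acting on M = functions X -> K *)
Definition pi_gen (g : gen V Ed) (phi : R -> K) : R -> K := fun x =>
  match g with
  | GV v => if chi (Dv (idx B) v) x then phi x else 0
  | GE e => if chi (Re e) x then phi (gi B e x) else 0
  | GS e => if chi (Dv (idx B) (rng G e)) x then phi (fe B e x) else 0
  end.

Definition pi_word (w : seq (gen V Ed)) (phi : R -> K) : R -> K :=
  foldr pi_gen phi w.

Definition pi_poly (p : ncpoly K V Ed) (phi : R -> K) : R -> K := fun x =>
  \sum_(cw <- p) cw.1 * pi_word cw.2 phi x.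

Definition pi_zero (p : ncpoly K V Ed) : Prop :=
  forall (phi : R -> K) x, Xsp x -> pi_poly p phi x = 0.
End Construction.

(* Main.v *)
Require Import Defs.
From HB Require Import structures.
From mathcomp Require Import all_boot all_order all_algebra.
From Stdlib Require Import Reals Lra Classical ClassicalEpsilon ProofIrrelevance FunctionalExtensionality.

Set Implicit Arguments. Unset Strict Implicit. Unset Printing Implicit Defensive.

Module P1.


Inductive nf (V Ed : Type) := NZ | NI of V | NT of option Ed & seq Ed & option Ed.
Arguments NZ {V Ed}. Arguments NI {V Ed}. Arguments NT {V Ed}.

Section NF.
Variables (V Ed : eqType) (rng : Ed -> V) (v0 : V) (rinv : V -> option Ed).

Definition nfgen (g : gen V Ed) : nf V Ed := match g with
 | GV v => if v == v0 then NT None [::] None else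
     match rinv v with Some e => NT (Some e) [::] (Some e) | None => NI v end
 | GE e => NT None [::] (Some e)
 | GS e => NT (Some e) [::] None end.

Definition nfmul (x y : nf V Ed) : nf V Ed := match x, y with
 | NI w, NI w' => if w == w' then NI w else NZ
 | NT a Q None, NT None Q' b => NT a (Q ++ Q') b
 | NT a Q (Some f), NT (Some g) Q' b => if f == g then NT a (Q ++ f :: Q') b else NZ
 | _, _ => NZ end.

Fixpoint nfw (g : gen V Ed) (t : seq (gen V Ed)) := match t with
 | [::] => nfgen g | h :: t' => nfmul (nfgen g) (nfw h t') end.

Definition wf (n : nf V Ed) := match n with
  NI w => (w != v0) && (rinv w == None) | _ => true end.

Variables (M : Type) (mul : M -> M -> M) (z : M).
Local Infix "**" := mul (at level 40, left associativity).
Hypothesis mulA : forall x y w, x ** (y ** w) = x ** y ** w.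
Hypothesis mulz : forall x, x ** z = z.
Hypothesis zmul : forall x, z ** x = z.
Variables (gv : V -> M) (ge gs : Ed -> M).
Hypothesis Hrinv1 : forall v e, rinv v = Some e -> rng e = v.
Hypothesis Hrinv2 : forall v, rinv v = None -> forall e, rng e != v.
Hypothesis Hrv0 : forall e, rng e != v0.
Hypothesis Hrinj : forall e f, rng e = rng f -> e = f.
Hypothesis Hidem : forall v, gv v ** gv v = gv v.
Hypothesis Horth : forall v w, v != w -> gv v ** gv w = z.
Hypothesis H3a : forall e, gv v0 ** ge e = ge e.
Hypothesis H3b : forall e, ge e ** gv (rng e) = ge e.
Hypothesis H4a : forall e, gv (rng e) ** gs e = gs e.
Hypothesis H4b : forall e, gs e ** gv v0 = gs e.
Hypothesis H5 : forall e, gs e ** ge e = gv (rng e).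

Fixpoint PP (Q : seq Ed) : M := match Q with
  [::] => gv v0 | e :: Q' => (ge e ** gs e) ** PP Q' end.
Definition pre (a : option Ed) (x : M) := match a with None => x | Some e => gs e ** x end.
Definition post (b : option Ed) (x : M) := match b with None => x | Some f => x ** ge f end.
Definition Inf (n : nf V Ed) : M := match n with
  NZ => z | NI w => gv w | NT a Q b => pre a (post b (PP Q)) end.
Definition ig (g : gen V Ed) : M := match g with GV v => gv v | GE e => ge e | GS e => gs e end.
Fixpoint wp (g : gen V Ed) (t : seq (gen V Ed)) : M := match t with
  [::] => ig g | h :: t' => ig g ** wp h t' end.

Lemma PPl Q : gv v0 ** PP Q = PP Q.
Proof. case: Q => [|e Q] /=; first exact: Hidem. by rewrite !mulA H3a. Qed.
Lemma PPr Q : PP Q ** gv v0 = PP Q.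
Proof. elim: Q => [|e Q IH] /=; first exact: Hidem. by rewrite -mulA IH. Qed.
Lemma PPcat Q Q' : PP Q ** PP Q' = PP (Q ++ Q').
Proof. elim: Q => [|e Q IH] /=; first exact: PPl. by rewrite -mulA IH. Qed.

Lemma preM a x y : pre a x ** y = pre a (x ** y).
Proof. by case: a => //= e; rewrite mulA. Qed.
Lemma postM b x y : x ** post b y = post b (x ** y).
Proof. by case: b => //= f; rewrite mulA. Qed.
Lemma pre_z a : pre a z = z. Proof. by case: a => //= e; rewrite mulz. Qed.
Lemma post_z b : post b z = z. Proof. by case: b => //= e; rewrite zmul. Qed.

Lemma neq_sym (x y : V) : x != y -> y != x. Proof. by rewrite eq_sym. Qed.

Lemma Inf_left n w : wf n -> w != v0 -> (forall e, rng e != w) ->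
  gv w ** Inf n = if n is NI w' then (if w == w' then gv w else z) else z.
Proof.
case: n => [|w'|a Q b] /= Hwf Hw Hr; first exact: mulz.
  by case: eqP => [<-|/eqP ne]; [exact: Hidem | exact: Horth].
case: a => [e|] /=.
  by rewrite -H4a -mulA mulA Horth ?zmul // neq_sym.
by rewrite -PPl postM mulA Horth ?zmul ?post_z.
Qed.

Lemma Inf_right n w : wf n -> w != v0 -> (forall e, rng e != w) ->
  Inf n ** gv w = if n is NI w' then (if w' == w then gv w else z) else z.
Proof.
case: n => [|w'|a Q b] /= Hwf Hw Hr; first exact: zmul.
  by case: eqP => [->|/eqP ne]; [exact: Hidem | exact: Horth].
rewrite preM; case: b => [f|] /=.
  by rewrite -H3b -!mulA Horth ?mulz ?pre_z // Hr.
by rewrite -PPr -mulA Horth ?mulz ?pre_z // neq_sym.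
Qed.

Lemma fg_z f g : f != g -> ge f ** gs g = z.
Proof.
move=> ne; rewrite -H3b -H4a mulA -(mulA (ge f)) Horth ?mulz ?zmul //.
by apply/eqP => /Hrinj; apply/eqP.
Qed.
Lemma fv0_z f : ge f ** gv v0 = z.
Proof. by rewrite -H3b -mulA Horth ?mulz. Qed.
Lemma v0g_z g : gv v0 ** gs g = z.
Proof. by rewrite -H4a mulA Horth ?zmul // neq_sym. Qed.
Lemma mid_z x y w : y = z -> x ** y ** w = z.
Proof. by move=> ->; rewrite mulz zmul. Qed.

Lemma nfmulP x y : wf x -> wf y -> Inf x ** Inf y = Inf (nfmul x y) /\ wf (nfmul x y).
Proof.
case: x => [|w|a Q b] Hx Hy.
- by rewrite /= zmul.
- case/andP: Hx => Hw /eqP Hn; have Hr := Hrinv2 Hn.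
  rewrite /= Inf_left //; case: y Hy => [|w'|a Q b] //= _.
  by case: (w == w') => //=; rewrite Hw Hn.
- clear Hx; case: y Hy => [|w|a' Q' b'] Hy.
  + by rewrite /= mulz; case: b.
  + case/andP: Hy => Hw /eqP Hn; have Hr := Hrinv2 Hn.
    by rewrite Inf_right //; case: b.
  + clear Hy; case: b => [f|]; case: a' => [g|] /=.
    * rewrite preM postM; case: eqP => [<-|/eqP ne] /=.
        by split => //; rewrite postM -PPcat /= !mulA.
      rewrite postM.
      have -> : PP Q ** ge f ** (gs g ** PP Q') = z.
        by rewrite mulA -(mulA (PP Q)) mid_z // fg_z.
      by rewrite post_z pre_z.
    * rewrite preM postM.
      have -> : PP Q ** ge f ** PP Q' = z.
        by rewrite -(PPl Q') mulA -(mulA (PP Q)) mid_z // fv0_z.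
      by rewrite post_z pre_z.
    * rewrite preM.
      have -> : PP Q ** (gs g ** post b' (PP Q')) = z.
        by rewrite -(PPr Q) mulA -(mulA (PP Q)) mid_z // v0g_z.
      by rewrite pre_z.
    * by rewrite preM postM PPcat.
Qed.

Lemma nfgenP g : Inf (nfgen g) = ig g /\ wf (nfgen g).
Proof.
case: g => [v|e|e] /=.
- case: eqP => [->|/eqP ne] /=; first by [].
  case E: (rinv v) => [e|] /=.
    by rewrite H3a H5 (Hrinv1 E).
  by rewrite ne E.
- by rewrite H3a.
- by rewrite H4b.
Qed.

Lemma nfwP g t : Inf (nfw g t) = wp g t /\ wf (nfw g t).
Proof.
elim: t g => [|h t IH] g /=; first exact: nfgenP.
case: (IH h) => <- W; case: (nfgenP g) => <- W'.
by case: (nfmulP W' W) => -> ->.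
Qed.
Lemma pre_ext e x : gs e ** x = gs e ** ((ge e ** gs e) ** x).
Proof. by rewrite !mulA H5 H4a. Qed.
Lemma post_ext Q f : PP Q ** ge f = PP (rcons Q f) ** ge f.
Proof.
elim: Q => [|e Q IH] /=; last by rewrite -!mulA IH.
by rewrite H3a -!mulA H3a H5 H3b.
Qed.
End NF.

End P1.
Import P1.

Module P2.

Import GRing.Theory.
Local Open Scope ring_scope.

Lemma In_memP (T : eqType) (x : T) l : List.In x l <-> x \in l.
Proof.
elim: l => [|y l IH] //=; rewrite in_cons; split.
  by case=> [->|/IH ->]; rewrite ?eqxx ?orbT.
by case/orP => [/eqP ->|/IH]; [left|right].
Qed.

Section Comm.
Variables (V Ed Cl : countType) (G : sepgraph V Ed Cl) (S : Cl -> Prop).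
Variables (K : fieldType) (A : algType K) (gv : V -> A) (ge gs : Ed -> A).
Hypothesis HM : AL_model G S gv ge gs.
Variable v0 : V.
Hypothesis Hsrc : forall e, src G e = v0.
Hypothesis Hsurj : forall Y : Cl, exists e, cl G e = Y.
Hypothesis HfinS : forall Y, S Y -> fin_block G Y.

Lemma mulr0A (x : A) : x * 0 = 0. Proof. exact: mulr0. Qed.
Lemma mul0rA (x : A) : 0 * x = 0. Proof. exact: mul0r. Qed.

Definition q e := ge e * gs e.

Lemma qcomm e f : q e * q f = q f * q e.
Proof.
case: HM => _ [_ [_ [_ [_ [_ [_ [_ Hab]]]]]]].
have := Hab [:: (true, e)] [:: (true, f)] isT isT.
by rewrite /interp_path /path_star /= !big_seq1 /= /q !mulrA.
Qed.

Lemma v0q e : gv v0 * q e = q e.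
Proof. by case: HM => _ [_ [H3a _]]; rewrite /q mulrA -(Hsrc e) H3a. Qed.
Lemma qv0 e : q e * gv v0 = q e.
Proof. by case: HM => _ [_ [_ [_ [_ [H4b _]]]]]; rewrite /q -mulrA -(Hsrc e) H4b. Qed.
Lemma qq e : q e * q e = q e.
Proof.
case: HM => _ [_ [_ [H3b [_ [_ [H5 _]]]]]].
by rewrite /q mulrA -(mulrA (ge e)) H5 ?eqxx // H3b.
Qed.
Lemma qorth e f : e != f -> cl G e = cl G f -> q e * q f = 0.
Proof.
case: HM => _ [_ [_ [_ [_ [_ [H5 _]]]]]] ne C.
by rewrite /q mulrA -(mulrA (ge e)) H5 // (negPf ne) mulr0 mul0r.
Qed.
Lemma v0v0 : gv v0 * gv v0 = gv v0.
Proof. by case: HM. Qed.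

Definition fac e (b : bool) := if b then q e else gv v0 - q e.
Fixpoint ctx (D : seq (Ed * bool)) : A := match D with
  [::] => gv v0 | (e, b) :: D' => ctx D' * fac e b end.

Lemma fac_v0 e b : fac e b * gv v0 = fac e b.
Proof. by case: b => /=; rewrite ?mulrBl ?qv0 ?v0v0. Qed.
Lemma fac_comm e b f : fac e b * q f = q f * fac e b.
Proof. case: b => /=; first exact: qcomm. by rewrite mulrBl mulrBr v0q qv0 qcomm. Qed.
Lemma ctx_v0 D : ctx D * gv v0 = ctx D.
Proof. by case: D => [|[e b] D] /=; rewrite ?v0v0 // -mulrA fac_v0. Qed.
Lemma ctx_comm D f : ctx D * q f = q f * ctx D.
Proof.
elim: D => [|[e b] D IH] /=; first by rewrite v0q qv0.
by rewrite -mulrA fac_comm mulrA IH mulrA.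
Qed.
Lemma ctx_true D e : (e, true) \in D -> ctx D * q e = ctx D.
Proof.
elim: D => [|[e' b] D IH] //=; rewrite in_cons => /orP [/eqP [<- <-]|H].
  by rewrite /= -mulrA qq.
by rewrite -mulrA fac_comm mulrA IH.
Qed.
Lemma ctx_false D e : (e, false) \in D -> ctx D * q e = 0.
Proof.
elim: D => [|[e' b] D IH] //=; rewrite in_cons => /orP [/eqP [<- <-]|H].
  by rewrite /= -mulrA mulrBl qq v0q subrr mulr0A.
by rewrite -mulrA fac_comm mulrA IH // ; apply: mul0rA.
Qed.

Definition tr (D : seq (Ed * bool)) e := (e, true) \in D.
Definition dm (D : seq (Ed * bool)) e := ((e, true) \in D) || ((e, false) \in D).
Definition okd (D : seq (Ed * bool)) :=
  (forall e f, tr D e -> tr D f -> cl G e = cl G f -> e = f) /\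
  (forall Y, S Y -> (forall e, cl G e = Y -> dm D e) ->
     exists e, cl G e = Y /\ tr D e).

Lemma ctx_PP D Q : all (dm D) Q ->
  ctx D * PP v0 *%R gv ge gs Q = if all (tr D) Q then ctx D else 0.
Proof.
elim: Q => [|e Q IH] /=; first by rewrite ctx_v0.
case/andP => /orP [Ht|Hf] HQ; rewrite mulrA -/(q e).
  by rewrite ctx_true // IH // /tr Ht.
rewrite ctx_false // mul0rA.
case Ht: (tr D e) => //=; case: ifP => // _.
by rewrite -(ctx_true Ht) ctx_false.
Qed.

Lemma ctx_bad1 D e f : tr D e -> tr D f -> e != f -> cl G e = cl G f -> ctx D = 0.
Proof.
move=> He Hf ne C.
rewrite -(ctx_true He) -(ctx_true Hf) -mulrA qorth ?mulr0A //; by rewrite eq_sym.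
Qed.

Lemma Ssum Y : S Y -> exists l : seq Ed, [/\ uniq l, (forall e, (e \in l) = (cl G e == Y)) &
   gv v0 = \sum_(e <- l) q e].
Proof.
move=> SY; case: (HfinS SY) => l Hl.
have Hl' : forall e, (e \in undup l) = (cl G e == Y).
  move=> e; rewrite mem_undup; apply/idP/eqP.
    by move/In_memP/Hl.
  by move/Hl/In_memP.
exists (undup l); split => //; first exact: undup_uniq.
case: (Hsurj Y) => e0 He0.
case: HM => _ [_ [_ [_ [_ [_ [_ [HS _]]]]]]].
rewrite -(Hsrc e0); apply: (HS Y SY) => //; first exact: undup_uniq.
by move=> e; rewrite Hl'; split => [/eqP|->].
Qed.

Lemma ctx_bad2 D Y : S Y -> (forall e, cl G e = Y -> dm D e) ->
  (forall e, cl G e = Y -> ~~ tr D e) -> ctx D = 0.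
Proof.
move=> SY Hd Ht; case: (Ssum SY) => l [_ Hl Hs].
rewrite -ctx_v0 Hs mulr_sumr big_seq big1 // => e.
rewrite Hl => /eqP C.
case/orP: (Hd e C) => H; first by move: (Ht e C); rewrite /tr H.
exact: ctx_false.
Qed.

Lemma ctx_notok D : ~ okd D -> ctx D = 0.
Proof.
move=> Hn; apply: NNPP => Hne; apply: Hn; split.
  move=> e f He Hf C; apply: NNPP => ne; apply: Hne.
  by apply: (ctx_bad1 He Hf) => //; apply/eqP.
move=> Y SY Hd; apply: NNPP => Hex; apply: Hne.
apply: (ctx_bad2 SY Hd) => e C; apply/negP => Ht; apply: Hex; by exists e.
Qed.

Lemma okd_eq D1 D2 : D1 =i D2 -> okd D1 -> okd D2.
Proof.
move=> E [H1 H2]; split.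
  by move=> e f; rewrite /tr -!E; apply: H1.
move=> Y SY Hd; case: (H2 Y SY) => [e C|e [C Ht]].
  by move: (Hd e C); rewrite /dm !E.
by exists e; split => //; move: Ht; rewrite /tr E.
Qed.

Lemma comm_main (L : seq (K * seq Ed)) F : forall D,
  (forall i, i \in L -> forall e, e \in i.2 -> (e \in F) || dm D e) ->
  (forall U, map fst U = F -> okd (U ++ D) ->
     \sum_(i <- L) (if all (tr (U ++ D)) i.2 then i.1 else 0) = 0) ->
  ctx D * \sum_(i <- L) i.1 *: PP v0 *%R gv ge gs i.2 = 0.
Proof.
elim: F => [|e F IH] D H1 H2.
  rewrite mulr_sumr big_seq.
  rewrite (eq_bigr (fun i => (if all (tr D) i.2 then i.1 else 0) *: ctx D)); last first.
    move=> i Hi; rewrite -scalerAr ctx_PP; last by apply/allP => e /(H1 i Hi).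
    by case: ifP => _; rewrite ?scale0r ?scaler0.
  rewrite -scaler_suml -big_seq.
  case: (classic (okd D)) => Hok.
    by rewrite (H2 [::]) // scale0r.
  by rewrite ctx_notok // scaler0.
have -> : ctx D = ctx ((e, true) :: D) + ctx ((e, false) :: D).
  by rewrite /= -mulrDr addrC subrK ctx_v0.
have Hb : forall b, ctx ((e, b) :: D) * \sum_(i <- L) i.1 *: PP v0 *%R gv ge gs i.2 = 0.
  move=> b; apply: IH.
    move=> i Hi e' He'; case/orP: (H1 i Hi e' He'); last first.
      by rewrite /dm !in_cons => /orP [] ->; rewrite !orbT.
    rewrite in_cons => /orP [/eqP ->|->] //.
    by rewrite /dm !in_cons; case: b; rewrite eqxx ?orbT.
  move=> U HU Hok.
  have E : (U ++ (e, b) :: D) =i ((e, b) :: U) ++ D.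
    by move=> x; rewrite !mem_cat !in_cons orbCA orbA.
  have -> : \sum_(i <- L) (if all (tr (U ++ (e, b) :: D)) i.2 then i.1 else 0) =
            \sum_(i <- L) (if all (tr (((e, b) :: U) ++ D)) i.2 then i.1 else 0).
    apply: eq_bigr => i _; congr (if _ then _ else _); apply: eq_all => x.
    by rewrite /tr E.
  apply: H2; first by rewrite /= HU.
  exact: okd_eq Hok.
by rewrite mulrDl !Hb addr0.
Qed.
End Comm.

End P2.
Import P2.

Module P3.


Section Cells.
Variables (V Ed Cl : countType) (G : sepgraph V Ed Cl) (S : Cl -> Prop) (B : bdata V Ed Cl).
Hypothesis HC : is_construction G S B.
Local Notation valid := (valid_addr G S B).
Local Notation itv := (itv B).
Local Notation D := (Dv (idx B)).

Lemma valid_cat v t s : valid v (t ++ s) -> valid v t.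
Proof.
move=> H j Hj; have := H j; rewrite size_cat nth_cat Hj.
by apply; apply: leq_trans Hj (leq_addr _ _).
Qed.

Lemma valid_rcons v t a : valid v (rcons t a) -> valid v t.
Proof. by rewrite -cats1; apply: valid_cat. Qed.

Lemma valid_blk v t a : valid v (rcons t a) ->
  exists e, src G e = v /\ bidx B (cl G e) = size t.
Proof.
move=> H; have := H (size t); rewrite size_rcons nth_rcons ltnn eqxx => /(_ (leqnn _)).
by move: H => _; case: a => [e [He1 He2]|[e [He1 [He2 _]]]]; exists e.
Qed.

Lemma valid_rcons_some v t e : valid v t -> src G e = v -> bidx B (cl G e) = size t ->
  valid v (rcons t (Some e)).
Proof.
move=> H He Hb j; rewrite size_rcons ltnS nth_rcons leq_eqVlt => /orP [/eqP ->|Hj].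
  by rewrite ltnn eqxx.
by rewrite Hj; apply: H.
Qed.

Lemma itv_step v t a x : valid v (rcons t a) -> itv v (rcons t a) x -> itv v t x.
Proof.
move=> Hv Hx; case: HC => _ [_ [_ [_ [_ [Hst _]]]]].
case: (Hst v t (valid_rcons Hv) (valid_blk Hv)) => _ [_ H3].
by apply/H3; exists a.
Qed.

Lemma itv_sub v t s x : valid v (t ++ s) -> itv v (t ++ s) x -> itv v t x.
Proof.
elim/last_ind: s => [|s a IH]; first by rewrite cats0.
rewrite -rcons_cat => Hv Hx; apply: IH; first exact: valid_rcons Hv.
exact: itv_step Hx.
Qed.

Lemma itv0 v x : itv v [::] x -> D v x.
Proof. by case: HC => _ [_ [_ [_ [H0 _]]]]; move/H0. Qed.

Lemma itv_D v t x : valid v t -> itv v t x -> D v x.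
Proof. by move=> Hv Hx; apply: itv0; apply: (@itv_sub v [::] t). Qed.

Lemma itv_ne v t : valid v t -> exists x, itv v t x.
Proof.
elim/last_ind: t => [|t a IH] Hv.
  exists (INR (idx B v)); case: HC => _ [_ [_ [_ [H0 _]]]]; apply/H0.
  rewrite /Dv; split; [apply: Rle_refl | lra].
case: HC => _ [_ [_ [_ [_ [Hst _]]]]].
case: (Hst v t (valid_rcons Hv) (valid_blk Hv)) => H1 _.
case: (H1 a Hv) => l [r [Hlr Hiff]]; exists l; apply/Hiff; split; [apply: Rle_refl|exact: Hlr].
Qed.

Lemma itv_uniq v t1 t2 x : valid v t1 -> valid v t2 -> size t1 = size t2 ->
  itv v t1 x -> itv v t2 x -> t1 = t2.
Proof.
elim/last_ind: t1 t2 => [|t1 a IH] t2.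
  by case: t2.
case/lastP: t2 => [|t2 b]; first by rewrite size_rcons.
rewrite !size_rcons => H1 H2 [Hs] X1 X2.
have E : t1 = t2.
  exact: (IH _ (valid_rcons H1) (valid_rcons H2) Hs (itv_step H1 X1) (itv_step H2 X2)).
subst t2; congr rcons.
case: HC => _ [_ [_ [_ [_ [Hst _]]]]].
case: (Hst v t1 (valid_rcons H1) (valid_blk H1)) => _ [Hd _].
exact: (Hd a b x).
Qed.

Lemma Dv_disj v w x : D v x -> D w x -> v = w.
Proof.
move=> [H1 H2] [H3 H4]; case: HC => Hinj _; apply: Hinj.
case: (ltngtP (idx B v) (idx B w)) => h //.
  have : (INR (idx B v).+1 <= INR (idx B w))%R by apply/le_INR/leP.
  rewrite S_INR => ?; exfalso; lra.
have : (INR (idx B w).+1 <= INR (idx B v))%R by apply/le_INR/leP.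
rewrite S_INR => ?; exfalso; lra.
Qed.

Lemma Re_D e x : Re G S B e x -> D (src G e) x.
Proof.
case=> t [Hv [Hs Hx]]; apply: (itv_D (t := rcons t (Some e))) => //.
exact: valid_rcons_some.
Qed.

Lemma Re_gi e x : Re G S B e x -> D (rng G e) (gi B e x) /\ Defs.fe B e (gi B e x) = x.
Proof.
case=> t [Hv [Hs Hx]].
case: HC => _ [_ [_ [_ [_ [_ [Hdk Hfe]]]]]].
case: (Hfe e t Hv Hs) => _ [_ H3]; case: (H3 x Hx) => Hd ->; split => //.
case: (Hdk e) => _ [_ H]; apply/H; by exists t.
Qed.

Lemma Dr_fe e x : D (rng G e) x -> Re G S B e (Defs.fe B e x) /\ gi B e (Defs.fe B e x) = x.
Proof.
case: HC => _ [_ [_ [_ [_ [_ [Hdk Hfe]]]]]].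
case: (Hdk e) => _ [_ H] /H [t [[Hv Hs] Hx]].
case: (Hfe e t Hv Hs) => H1 [H2 _]; split; last exact: H2.
by exists t; split => //; split => //; apply: H1.
Qed.

Variable v0 : V.
Hypothesis Hsrc : forall e, src G e = v0.

Lemma Re_char t e y : valid v0 t -> bidx B (cl G e) < size t -> itv v0 t y ->
  (Re G S B e y <-> nth None t (bidx B (cl G e)) = Some e).
Proof.
set k := bidx B (cl G e) => Hv Hk Hy.
have E : t = take k.+1 t ++ drop k.+1 t by rewrite cat_take_drop.
have Hvp : valid v0 (take k.+1 t) by apply: (@valid_cat _ _ (drop k.+1 t)); rewrite -E.
have Hp : itv v0 (take k.+1 t) y by apply: (@itv_sub _ _ (drop k.+1 t)); rewrite -E.
rewrite (take_nth None Hk) in Hvp Hp.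
split.
  case=> t' [Hv' [Hs' Hx']]; rewrite Hsrc in Hv' Hx'.
  have := itv_uniq (valid_rcons_some Hv' (Hsrc e) (esym Hs')) Hvp _ Hx' Hp.
  rewrite !size_rcons size_takel ?Hs'; last exact: ltnW.
  by move/(_ erefl)/rcons_inj => [_ <-].
move=> Hn; rewrite Hn in Hvp Hp; exists (take k t); rewrite Hsrc.
split; first exact: valid_rcons Hvp.
by rewrite size_takel ?(ltnW Hk).
Qed.

Lemma list_choice (P : nat -> option Ed -> Prop) N :
  (forall j, j < N -> exists a, P j a) ->
  exists t, size t = N /\ forall j, j < N -> P j (nth None t j).
Proof.
elim: N => [|N IH] H; first by exists [::].
case: IH => [j Hj|t [Hs Ht]]; first by apply: H; apply: leq_trans Hj _.
case: (H N (ltnSn N)) => a Ha.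
exists (rcons t a); rewrite size_rcons Hs; split => // j.
rewrite ltnS leq_eqVlt nth_rcons Hs => /orP [/eqP ->|Hj].
  by rewrite ltnn eqxx.
by rewrite Hj; apply: Ht.
Qed.

Lemma realize (F : seq Ed) (U : seq (Ed * bool)) :
  uniq F -> map fst U = F ->
  (forall e f, (e, true) \in U -> (f, true) \in U -> cl G e = cl G f -> e = f) ->
  (forall Y, S Y -> (forall e, cl G e = Y -> ((e, true) \in U) || ((e, false) \in U)) ->
     exists e, cl G e = Y /\ (e, true) \in U) ->
  exists y, D v0 y /\ forall e, e \in F -> (Re G S B e y <-> (e, true) \in U).
Proof.
move=> HF HU Hok1 Hok2.
have dmF : forall e, ((e, true) \in U) || ((e, false) \in U) -> e \in F.
  by move=> e /orP [] H; rewrite -HU; apply/mapP; [exists (e, true) | exists (e, false)].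
have Fdm : forall e, e \in F -> ((e, true) \in U) || ((e, false) \in U).
  move=> e; rewrite -HU => /mapP [[e' b] Hin /= ->].
  by case: b Hin => ->; rewrite ?orbT.
set N := \max_(e <- F) (bidx B (cl G e)).+1.
pose P j (a : option Ed) :=
  [/\ match a with
      | Some e => src G e = v0 /\ bidx B (cl G e) = j
      | None => exists e, src G e = v0 /\ bidx B (cl G e) = j /\ ~ S (cl G e) end,
   (forall e, e \in F -> (e, true) \in U -> bidx B (cl G e) = j -> a = Some e) &
   (forall e, a = Some e -> e \in F -> (e, true) \in U)].
have HP : forall j, j < N -> exists a, P j a.
  move=> j Hj.
  have [ej Hej] : exists ej, bidx B (cl G ej) = j.
    case: (boolP (has (fun e => j < (bidx B (cl G e)).+1) F)).
      case/hasP => e1 _; rewrite ltnS leq_eqVlt => /orP [/eqP ->|Hl].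
        by exists e1.
      case: HC => _ [_ [_ [Hbd _]]]; case: (Hbd e1 j Hl) => e' [_ H']; by exists e'.
    move/hasPn => Hn; exfalso; move: Hj; rewrite ltnNge => /negP; apply.
    by apply/bigmax_leqP_seq => e He _; move: (Hn e He); rewrite -leqNgt.
  case: HC => _ [_ [Hbu _]].
  case: (classic (exists e, e \in F /\ (e, true) \in U /\ bidx B (cl G e) = j)).
    case=> e [He [Ht Hb]]; exists (Some e); split.
    - by split.
    - move=> e' He' Ht' Hb'; congr Some; apply: Hok1 Ht Ht' _.
      by apply: Hbu; rewrite ?Hsrc // Hb Hb'.
    - by move=> e' [<-].
  move=> Hne.
  case: (classic (S (cl G ej))) => HS.
    have : ~ (forall e, cl G e = cl G ej -> ((e, true) \in U) || ((e, false) \in U)).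
      move=> Hall; case: (Hok2 _ HS Hall) => e [C Ht]; apply: Hne; exists e.
      split; [by apply: dmF; rewrite Ht | split => //; by rewrite C].
    move/not_all_ex_not => [e'' Hx]; case: (imply_to_and _ _ Hx) => C Hnd.
    exists (Some e''); split.
    - by split; rewrite ?Hsrc // C.
    - by move=> e He Ht Hb; exfalso; apply: Hne; exists e.
    - move=> e [<-] HeF; exfalso; exact: (Hnd (Fdm _ HeF)).
  exists None; split.
  - by exists ej; split; rewrite ?Hsrc.
  - by move=> e He Ht Hb; exfalso; apply: Hne; exists e.
  - by [].
case: (list_choice HP) => t [Hs Ht].
have Hv : valid v0 t.
  move=> j Hj; rewrite Hs in Hj; by case: (Ht j Hj).
case: (itv_ne Hv) => y Hy; exists y; split; first exact: itv_D Hy.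
move=> e He.
have Hk : bidx B (cl G e) < size t.
  by rewrite Hs; apply: (@leq_bigmax_seq _ F xpredT (fun e => (bidx B (cl G e)).+1) e).
rewrite (Re_char Hv Hk Hy); rewrite Hs in Hk; case: (Ht _ Hk) => _ H2 H3.
split; first by move/H3; apply.
by move=> Htr; apply: H2.
Qed.
End Cells.

End P3.
Import P3.

Module P4.

Import GRing.Theory.
Local Open Scope ring_scope.

Lemma chiT (P : R -> Prop) x : P x -> chi P x = true.
Proof. by rewrite /chi; case: excluded_middle_informative. Qed.
Lemma chiF (P : R -> Prop) x : ~ P x -> chi P x = false.
Proof. by rewrite /chi; case: excluded_middle_informative. Qed.
Lemma chiP (P : R -> Prop) x : chi P x = true -> P x.
Proof. by rewrite /chi; case: excluded_middle_informative. Qed.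
Lemma chi_cases (P : R -> Prop) x : (P x /\ chi P x = true) \/ (~ P x /\ chi P x = false).
Proof. by rewrite /chi; case: excluded_middle_informative => H; [left|right]. Qed.

Section PiModel.
Variables (V Ed Cl : countType) (G : sepgraph V Ed Cl) (S : Cl -> Prop) (B : bdata V Ed Cl).
Variable K : fieldType.
Hypothesis HC : is_construction G S B.
Variable v0 : V.
Hypothesis Hsrc : forall e, src G e = v0.
Hypothesis Hrinj : forall e f, rng G e = rng G f -> e = f.
Hypothesis Hloop : forall e, rng G e <> src G e.
Local Notation D := (Dv (idx B)).

Definition Mpi := {f : (R -> K) -> (R -> K) | f (fun _ => GRing.zero) = (fun _ => GRing.zero)}.
Lemma Meq (f g : Mpi) : (forall phi x, proj1_sig f phi x = proj1_sig g phi x) -> f = g.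
Proof.
case: f => f Hf; case: g => g Hg /= H.
have E : f = g by apply: functional_extensionality => phi; apply: functional_extensionality.
subst g; f_equal; apply: proof_irrelevance.
Qed.

Definition mulpi (f g : Mpi) : Mpi.
Proof.
exists (fun phi => proj1_sig f (proj1_sig g phi)).
by rewrite (proj2_sig g) (proj2_sig f).
Defined.
Definition zpi : Mpi := exist _ (fun _ _ => GRing.zero) erefl.

Lemma pi_gen0 g : pi_gen G S B g (fun _ => GRing.zero) = (fun _ => GRing.zero :> K).
Proof.
by apply: functional_extensionality => x; case: g => [v|e|e] /=; case: chi.
Qed.
Definition pg g : Mpi := exist _ (pi_gen G S B g) (pi_gen0 g).
Definition pgv v := pg (GV Ed v).
Definition pge e := pg (GE V e).
Definition pgs e := pg (GS V e).

Definition rinv (v : V) : option Ed :=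
  match excluded_middle_informative (exists e, rng G e = v) with
  | left H => Some (proj1_sig (constructive_indefinite_description _ H))
  | right _ => None end.
Lemma rinv1 v e : rinv v = Some e -> rng G e = v.
Proof.
rewrite /rinv; case: excluded_middle_informative => // H [<-].
exact: proj2_sig (constructive_indefinite_description _ H).
Qed.
Lemma rinv2 v : rinv v = None -> forall e, rng G e != v.
Proof.
rewrite /rinv; case: excluded_middle_informative => // H _ e.
by apply/eqP => E; apply: H; exists e.
Qed.
Lemma rv0 e : rng G e != v0.
Proof. by apply/eqP; rewrite -(Hsrc e); apply: Hloop. Qed.

Lemma Re_D0 e x : Re G S B e x -> D v0 x.
Proof. by rewrite -(Hsrc e); apply: Re_D. Qed.
Lemma Dr_D0 e x : D (rng G e) x -> D v0 x -> False.
Proof. by move=> H1 H2; move: (rv0 e); rewrite (Dv_disj HC H1 H2) eqxx. Qed.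

Local Infix "**" := mulpi (at level 40, left associativity).

Lemma pmulA x y w : x ** (y ** w) = x ** y ** w. Proof. by apply: Meq. Qed.
Lemma pmulz x : x ** zpi = zpi. Proof. by apply: Meq => phi y /=; rewrite (proj2_sig x). Qed.
Lemma pzmul x : zpi ** x = zpi. Proof. by apply: Meq. Qed.
Lemma pidem v : pgv v ** pgv v = pgv v.
Proof. by apply: Meq => phi x /=; case: chi. Qed.
Lemma porth v w : v != w -> pgv v ** pgv w = zpi.
Proof.
move=> ne; apply: Meq => phi x /=.
case: (chi_cases (D v) x) => [[Hv ->]|[_ ->]] //.
case: (chi_cases (D w) x) => [[Hw ->]|[_ ->]] //.
by move: ne; rewrite (Dv_disj HC Hv Hw) eqxx.
Qed.
Lemma p3a e : pgv v0 ** pge e = pge e.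
Proof.
apply: Meq => phi x /=.
case: (chi_cases (Re G S B e) x) => [[H ->]|[_ ->]]; last by case: chi.
by rewrite chiT //; apply: Re_D0 H.
Qed.
Lemma p3b e : pge e ** pgv (rng G e) = pge e.
Proof.
apply: Meq => phi x /=.
case: (chi_cases (Re G S B e) x) => [[H ->]|[_ ->]] //.
by rewrite chiT //; case: (Re_gi HC H).
Qed.
Lemma p4a e : pgv (rng G e) ** pgs e = pgs e.
Proof. by apply: Meq => phi x /=; case: chi. Qed.
Lemma p4b e : pgs e ** pgv v0 = pgs e.
Proof.
apply: Meq => phi x /=.
case: (chi_cases (D (rng G e)) x) => [[H ->]|[_ ->]] //.
by rewrite chiT //; case: (Dr_fe HC H) => H1 _; apply: Re_D0 H1.
Qed.
Lemma p5 e : pgs e ** pge e = pgv (rng G e).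
Proof.
apply: Meq => phi x /=.
case: (chi_cases (D (rng G e)) x) => [[H ->]|[_ ->]] //.
by case: (Dr_fe HC H) => H1 H2; rewrite chiT // H2.
Qed.

Definition Ipi := Inf v0 mulpi zpi pgv pge pgs.
Definition nfo (w : seq (gen V Ed)) : nf V Ed :=
  if w is g :: t then nfw v0 rinv g t else NZ.

Lemma pi_wordE g t phi x :
  pi_word G S B (g :: t) phi x = proj1_sig (Ipi (nfo (g :: t))) phi x /\ wf v0 rinv (nfo (g :: t)).
Proof.
have [E W] := nfwP pmulA pmulz pzmul rinv1 rinv2 rv0 Hrinj pidem porth p3a p3b p4a p4b p5 g t.
rewrite /Ipi /nfo E; split => //.
clear E W; elim: t g x => [|h t IH] g x /=; first by case: g.
have E : forall y, pi_gen G S B h (pi_word G S B t phi) y = sval (wp mulpi pgv pge pgs h t) phi y.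
  by move=> y; apply: IH.
by rewrite (functional_extensionality _ _ E); case: g.
Qed.

Definition delta (t : R) : R -> K := fun z => if chi (fun w => w = t) z then 1 else 0.
Definition allchi (Q : seq Ed) y := all (fun e => chi (Re G S B e) y) Q.

Lemma delta_eq t : delta t t = 1. Proof. by rewrite /delta chiT. Qed.
Lemma delta_neq t z : z <> t -> delta t z = 0. Proof. by move=> H; rewrite /delta chiF. Qed.

Lemma PPpi Q phi x : sval (PP v0 mulpi pgv pge pgs Q) phi x =
  if chi (D v0) x && allchi Q x then phi x else 0.
Proof.
elim: Q x => [|e Q IH] x /=; first by rewrite andbT.
case: (chi_cases (Re G S B e) x) => [[H ->]|[_ ->]]; last by rewrite andbF.
case: (Re_gi HC H) => H1 H2; rewrite chiT // H2 IH.
by rewrite (chiT (Re_D0 H)).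
Qed.

Lemma postPP b Q phi x : sval (post mulpi pge b (PP v0 mulpi pgv pge pgs Q)) phi x =
  if chi (D v0) x && allchi Q x then
    (match b with None => phi x | Some f => if chi (Re G S B f) x then phi (gi B f x) else 0 end)
  else 0.
Proof. by case: b => [f|] /=; rewrite PPpi. Qed.

Definition xpt (a : option Ed) y := if a is Some e then gi B e y else y.

Lemma evalT a b Q a' b' y : D v0 y -> (forall e, a = Some e -> Re G S B e y) ->
  (forall f, b = Some f -> Re G S B f y) ->
  sval (Ipi (NT a' Q b')) (delta (xpt b y)) (xpt a y) =
    if (a' == a) && (b' == b) && allchi Q y then 1 else 0.
Proof.
move=> Hy Ha Hb.
have Hout : forall psi z, ~ D v0 z ->
    sval (post mulpi pge b' (PP v0 mulpi pgv pge pgs Q)) psi z = 0.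
  by move=> psi z Hz; rewrite postPP chiF.
have Hin : sval (post mulpi pge b' (PP v0 mulpi pgv pge pgs Q)) (delta (xpt b y)) y =
    if (b' == b) && allchi Q y then 1 else 0.
  rewrite postPP (chiT Hy) /=; case: (allchi Q y); rewrite ?andbT ?andbF //.
  clear Hout; case: b Hb => [f|] Hb; case: b' => [f'|] /=.
  - have Hf := Hb f erefl; case: (Re_gi HC Hf) => Df _.
    case: (eqVneq f' f) => [->|ne]; first by rewrite chiT // delta_eq eqxx.
    have -> : (Some f' == Some f) = false by apply/eqP => [[E]]; move: ne; rewrite E eqxx.
    case: (chi_cases (Re G S B f') y) => [[Hf' ->]|[_ ->]] //.
    case: (Re_gi HC Hf') => Df' _; apply: delta_neq => E.
    by move: ne; rewrite (Hrinj (Dv_disj HC Df' (eq_ind _ _ Df _ (esym E)))) eqxx.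
  - have Hf := Hb f erefl; case: (Re_gi HC Hf) => Df _.
    by apply: delta_neq => E; apply: (Dr_D0 Df); rewrite -E.
  - case: (chi_cases (Re G S B f') y) => [[Hf' ->]|[_ ->]] //.
    case: (Re_gi HC Hf') => Df' _.
    by apply: delta_neq => E; apply: (Dr_D0 Df'); rewrite E.
  - by rewrite delta_eq.
rewrite /Ipi /=.
case: a Ha => [e|] Ha; case: a' => [e'|] /=.
- have He := Ha e erefl; case: (Re_gi HC He) => De Hfe.
  case: (eqVneq e' e) => [->|ne].
    by rewrite chiT // Hfe Hin eqxx.
  have -> : (Some e' == Some e) = false by apply/eqP => [[E]]; move: ne; rewrite E eqxx.
  rewrite chiF // => De'.
  by move: ne; rewrite (Hrinj (Dv_disj HC De' De)) eqxx.
- have He := Ha e erefl; case: (Re_gi HC He) => De _.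
  by rewrite Hout // => D0; apply: (Dr_D0 De).
- by rewrite chiF // => De'; apply: (Dr_D0 De').
- by rewrite Hin.
Qed.

Lemma evalT_NI a b w y : D v0 y -> (forall e, a = Some e -> Re G S B e y) ->
  wf v0 rinv (NI w) -> sval (Ipi (NI w)) (delta (xpt b y)) (xpt a y) = 0.
Proof.
move=> Hy Ha /andP [Hw /eqP Hn] /=.
rewrite chiF //; case: a Ha => [e|] Ha /= Dw.
  have He := Ha e erefl; case: (Re_gi HC He) => De _.
  by move: (rinv2 Hn e); rewrite (Dv_disj HC De Dw) eqxx.
by move: Hw; rewrite (Dv_disj HC Dw Hy) eqxx.
Qed.

Lemma evalI w n : w != v0 -> (forall e, rng G e != w) ->
  sval (Ipi n) (delta (INR (idx B w))) (INR (idx B w)) =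
    if n is NI w' then (if w' == w then 1 else 0) else 0.
Proof.
have Dw : D w (INR (idx B w)) by split; [apply: Rle_refl | lra].
move=> Hw Hr; case: n => [|w'|a Q b] //=.
  case: (eqVneq w' w) => [->|ne]; first by rewrite chiT // delta_eq.
  by rewrite chiF // => Dw'; move: ne; rewrite (Dv_disj HC Dw' Dw) eqxx.
case: a => [e|] /=.
  by rewrite chiF // => De; move: (Hr e); rewrite (Dv_disj HC De Dw) eqxx.
rewrite postPP chiF // => D0; by move: Hw; rewrite (Dv_disj HC Dw D0) eqxx.
Qed.
End PiModel.

End P4.
Import P4.

Module P5.

Import GRing.Theory.
Local Open Scope ring_scope.

Lemma group_sum (T : Type) (kT : eqType) (Z : zmodType) (key : T -> kT) (F : T -> Z) :
  forall n (L : seq T), leq (size L) n ->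
  (forall k, \sum_(i <- L | key i == k) F i = 0) -> \sum_(i <- L) F i = 0.
Proof.
elim=> [|n IH] [|i0 L] //= Hs H; rewrite ?big_nil //.
rewrite (bigID (fun i => key i == key i0)) /= H add0r.
rewrite -big_filter; apply: (IH) => [|k].
  by rewrite /= eqxx /= size_filter (leq_trans (count_size _ _) Hs).
rewrite big_filter_cond.
case: (eqVneq k (key i0)) => [->|ne].
  by rewrite big_pred0 // => i; case: eqP.
rewrite -[RHS](H k); apply: eq_bigl => i; case: (eqVneq (key i) k) => [->|_]; rewrite ?andbT ?andbF //.
Qed.

Lemma eq_big_all (T : Type) (Z : zmodType) (P : pred T) (F1 F2 : T -> Z) (s : seq T) :
  all P s -> (forall x, P x -> F1 x = F2 x) -> \sum_(x <- s) F1 x = \sum_(x <- s) F2 x.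
Proof.
elim: s => [|x s IH] /=; first by rewrite !big_nil.
by case/andP => Hx Hs H; rewrite !big_cons H // IH.
Qed.

Section Main.
Variables (V Ed Cl : countType) (G : sepgraph V Ed Cl) (S : Cl -> Prop) (K : fieldType)
  (B : bdata V Ed Cl).
Hypothesis HG : is_sepgraph G.
Hypothesis Hfin : forall Y, S Y -> fin_block G Y.
Variable v0 : V.
Hypothesis Hsrc : forall e, src G e = v0.
Hypothesis Hrinj : forall e f, rng G e = rng G f -> e = f.
Hypothesis Hloop : forall e, rng G e <> src G e.
Hypothesis HC : is_construction G S B.
Variable p : ncpoly K V Ed.
Hypothesis Hnc : no_const_term p.
Hypothesis Hpi : pi_zero G S B p.
Variables (A : algType K) (gv : V -> A) (ge gs : Ed -> A).
Hypothesis HM : AL_model G S gv ge gs.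

Lemma Aidem v : gv v * gv v = gv v. Proof. by case: HM. Qed.
Lemma Aorth v w : v != w -> gv v * gv w = 0. Proof. by move=> ne; case: HM => _ [H _]; apply: H. Qed.
Lemma A3a e : gv v0 * ge e = ge e. Proof. by case: HM => _ [_ [H _]]; rewrite -(Hsrc e). Qed.
Lemma A3b e : ge e * gv (rng G e) = ge e. Proof. by case: HM => _ [_ [_ [H _]]]. Qed.
Lemma A4a e : gv (rng G e) * gs e = gs e. Proof. by case: HM => _ [_ [_ [_ [H _]]]]. Qed.
Lemma A4b e : gs e * gv v0 = gs e.
Proof. by case: HM => _ [_ [_ [_ [_ [H _]]]]]; rewrite -(Hsrc e). Qed.
Lemma A5 e : gs e * ge e = gv (rng G e).
Proof. by case: HM => _ [_ [_ [_ [_ [_ [H _]]]]]]; rewrite H // eqxx. Qed.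
Lemma AmulA (x y w : A) : x * (y * w) = x * y * w. Proof. exact: mulrA. Qed.
Lemma Amulz (x : A) : x * 0 = 0. Proof. exact: mulr0. Qed.
Lemma Azmul (x : A) : 0 * x = 0. Proof. exact: mul0r. Qed.

Local Notation rinvG := (rinv G).
Local Notation IA := (Inf v0 *%R 0 gv ge gs).
Local Notation PA := (PP v0 *%R gv ge gs).
Local Notation nfoG := (nfo G v0).

Lemma rv0' e : rng G e != v0.
Proof. by apply/eqP; rewrite -(Hsrc e); apply: Hloop. Qed.

Lemma prod_IA (cw : K * seq (gen V Ed)) : ~~ nilp cw.2 ->
  \prod_(g <- cw.2) interp_gen gv ge gs g = IA (nfoG cw.2).
Proof.
case: cw => c [|g t] //= _.
have [-> _] := nfwP AmulA Amulz Azmul (@rinv1 _ _ _ G) (@rinv2 _ _ _ G) rv0' Hrinj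
  Aidem Aorth A3a A3b A4a A4b A5 g t.
elim: t g => [|h t IH] g /=; first by rewrite big_seq1; case: g.
by rewrite big_cons IH; case: g.
Qed.

Definition key (n : nf V Ed) : option (V + (option Ed * option Ed)) :=
  match n with NZ => None | NI w => Some (inl w) | NT a _ b => Some (inr (a, b)) end.
Definition Qof (n : nf V Ed) : seq Ed := if n is NT _ Q _ then Q else [::].
Definition exta (a : option Ed) Q := if a is Some e then e :: Q else Q.
Definition extb (b : option Ed) Q := if b is Some f then rcons Q f else Q.
Definition ext a b Q := exta a (extb b Q).

Lemma all_ext (P : pred Ed) a b Q : all P (ext a b Q) = all P (ext a b [::]) && all P Q.
Proof.
case: a => [e|]; case: b => [f|] /=; rewrite ?all_rcons /=.
- by case: (P e); case: (P f); case: (all P Q).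
- by case: (P e); case: (all P Q).
- by case: (P f); case: (all P Q).
- by [].
Qed.

Lemma mem_ext a b Q e : e \in ext a b [::] -> e \in ext a b Q.
Proof.
case: a => [a|]; case: b => [f|] //=; rewrite ?in_cons ?mem_rcons ?in_cons ?in_nil ?orbF.
- by case/orP => ->; rewrite ?orbT.
- by move=> ->.
- by move=> ->.
Qed.

Lemma mem_extQ a b Q e : e \in Q -> e \in ext a b Q.
Proof.
case: a => [a|]; case: b => [f|] //=; rewrite ?in_cons ?mem_rcons ?in_cons => ->; by rewrite ?orbT.
Qed.

Lemma IA_ext a Q b : IA (NT a Q b) = P1.pre *%R gs a (post *%R ge b (PA (ext a b Q))).
Proof.
rewrite /= /ext; case: b => [f|] /=.
  rewrite (post_ext AmulA A3a A3b A5); case: a => [e|] //=.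
  by rewrite (pre_ext AmulA A4a A5) !mulrA.
by case: a => [e|] //=; rewrite (pre_ext AmulA A4a A5).
Qed.

Lemma pre_sum a (L : seq (K * seq Ed)) (Y : seq Ed -> A) :
  P1.pre *%R gs a (\sum_(i <- L) i.1 *: Y i.2) = \sum_(i <- L) i.1 *: P1.pre *%R gs a (Y i.2).
Proof.
case: a => [e|] //=; rewrite mulr_sumr; apply: eq_bigr => i _; by rewrite scalerAr.
Qed.
Lemma post_sum b (L : seq (K * seq Ed)) (Y : seq Ed -> A) :
  post *%R ge b (\sum_(i <- L) i.1 *: Y i.2) = \sum_(i <- L) i.1 *: post *%R ge b (Y i.2).
Proof.
case: b => [f|] //=; rewrite mulr_suml; apply: eq_bigr => i _; by rewrite scalerAl.
Qed.


Lemma wf_nfo (cw : K * seq (gen V Ed)) : ~~ nilp cw.2 -> wf v0 rinvG (nfoG cw.2).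
Proof.
case: cw => c [|g t] //= _.
by case: (pi_wordE (K:=K) HC Hsrc Hrinj Hloop g t (fun _ => 0) 0%R).
Qed.

Lemma pi_sum phi x : Xsp B x ->
  \sum_(cw <- p) cw.1 * sval (Ipi G S B K v0 (nfoG cw.2)) phi x = 0.
Proof.
move=> Hx; transitivity (pi_poly G S B p phi x); last exact: Hpi.
rewrite /pi_poly; apply: eq_big_all Hnc _.
case=> c [|g t] //= _; congr (_ * _).
by case: (pi_wordE (K:=K) HC Hsrc Hrinj Hloop g t phi x).
Qed.

Lemma has_all (T : Type) (P Q : pred T) s : has P s -> all Q s -> exists x, P x && Q x.
Proof.
elim: s => [|x s IH] //= /orP [Hx|Hs] /andP [Qx Qs].
  by exists x; rewrite Hx Qx.
exact: IH.
Qed.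

Local Notation kk cw := (key (nfoG cw.2)).

Lemma cornerZ : \sum_(cw <- p | kk cw == None) cw.1 *: IA (nfoG cw.2) = 0.
Proof.
rewrite big_mkcond; apply: big1 => cw _.
by case: (nfoG cw.2) => //= *; rewrite scaler0.
Qed.

Lemma sumfilter0 (T : Type) (P : pred T) (F : T -> A) s : ~~ has P s -> \sum_(x <- s | P x) F x = 0.
Proof.
move=> H; rewrite -big_filter; suff -> : [seq x <- s | P x] = [::] by rewrite big_nil.
by elim: s H => //= x s IH /norP [Hx Hs]; rewrite (negPf Hx) IH.
Qed.

Lemma cornerI w : \sum_(cw <- p | kk cw == Some (inl w)) cw.1 *: IA (nfoG cw.2) = 0.
Proof.
case: (boolP (has (fun cw => kk cw == Some (inl w)) p)) => Hh; last exact: sumfilter0.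
have [cw0 /andP [Hk Hn]] := has_all Hh Hnc.
have := wf_nfo Hn; move: Hk; case: (nfoG cw0.2) => //= w' /eqP [->] /andP [Hw /eqP Hr].
have Hr' := rinv2 Hr.
have Dw : Dv (idx B) w (INR (idx B w)) by split; [apply: Rle_refl | lra].
have := pi_sum (delta K (INR (idx B w))) (ex_intro _ w Dw).
have -> : \sum_(cw <- p) cw.1 * sval (Ipi G S B K v0 (nfoG cw.2)) (delta K (INR (idx B w))) (INR (idx B w))
   = \sum_(cw <- p | kk cw == Some (inl w)) cw.1.
  rewrite [RHS]big_mkcond; apply: eq_bigr => cw _.
  rewrite (evalI K HC Hsrc _ Hw Hr'); case: (nfoG cw.2) => [|w''|a Q b] /=; rewrite ?mulr0 //.
  case: (eqVneq w'' w) => [->|ne]; first by rewrite eqxx mulr1.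
  rewrite mulr0; case: eqP => // -[E]; by move: ne; rewrite E eqxx.
move=> Hs.
rewrite (eq_bigr (fun cw => cw.1 *: gv w)); last first.
  by move=> cw; case: (nfoG cw.2) => //= w'' /eqP [->].
by rewrite -scaler_suml Hs scale0r.
Qed.

Lemma all_flat (T : Type) (f : T -> seq Ed) s :
  all (fun x => all (fun e => e \in flatten (map f s)) (f x)) s.
Proof.
elim: s => [|x s IH] //=; apply/andP; split.
  by apply/allP => e He; rewrite mem_cat He.
apply: sub_all IH => y /allP H; apply/allP => e /H He; by rewrite mem_cat He orbT.
Qed.

Lemma mem_exta a b e : a = Some e -> e \in ext a b [::].
Proof. by move=> ->; rewrite /ext /= mem_head. Qed.
Lemma mem_extb a b f : b = Some f -> f \in ext a b [::].
Proof. by move=> ->; case: a => [e|] /=; rewrite !inE eqxx ?orbT. Qed.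
Lemma Xsp_xpt a y : Dv (idx B) v0 y -> (forall e, a = Some e -> Re G S B e y) -> Xsp B (xpt B a y).
Proof.
case: a => [e|] Hy Ha /=; last by exists v0.
by exists (rng G e); case: (Re_gi HC (Ha e erefl)).
Qed.

Lemma keyE (a a' b b' : option Ed) :
  (Some (inr (a', b')) == Some (inr (a, b)) :> option (V + (option Ed * option Ed))) =
  (a' == a) && (b' == b).
Proof. by apply/eqP/andP => [[-> ->]|[/eqP -> /eqP ->]]. Qed.

Lemma prepost0 a b : P1.pre *%R gs a (P1.post *%R ge b 0) = 0 :> A.
Proof. by case: a => [e|]; case: b => [f|] /=; rewrite ?mul0r ?mulr0. Qed.

Lemma cornerT a b : \sum_(cw <- p | kk cw == Some (inr (a, b))) cw.1 *: IA (nfoG cw.2) = 0.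
Proof.
set k := Some (inr (a, b)).
set L' := [seq (cw.1, ext a b (Qof (nfoG cw.2))) | cw <- [seq cw <- p | kk cw == k]].
have E1 : \sum_(cw <- p | kk cw == k) cw.1 *: IA (nfoG cw.2) =
    P1.pre *%R gs a (P1.post *%R ge b (\sum_(i <- L') i.1 *: PA i.2)).
  rewrite post_sum (pre_sum a L' (fun q => P1.post *%R ge b (PA q))) /L' big_map big_filter; apply: eq_bigr => cw /eqP.
  by case: (nfoG cw.2) => //= a' Q b' [-> ->]; move: (IA_ext a Q b) => /= ->.
rewrite E1; suff -> : \sum_(i <- L') i.1 *: PA i.2 = 0.
  exact: prepost0.
set F := undup (flatten (map snd L')).
have HallL : all (fun i => all (fun e => e \in F) i.2) L'.
  apply: sub_all (all_flat snd L') => i /allP H; apply/allP => e /H; by rewrite mem_undup.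
have Hallp : all (fun cw => (kk cw == k) ==> all (fun e => e \in F) (ext a b (Qof (nfoG cw.2)))) p.
  by move: HallL; rewrite /L' all_map all_filter.
have Hext : all (fun i => all (fun e => e \in i.2) (ext a b [::])) L'.
  rewrite /L' all_map all_filter; apply: (sub_all _ (all_predT _)) => cw _ /=; apply/implyP => _.
  by apply/allP => e /= He; apply: mem_ext.
have Hsurj : forall Y : Cl, exists e, cl G e = Y by case: HG.
have := comm_main HM Hsrc Hsurj Hfin (L := L') (F := F) (D := [::]).
rewrite /= mulr_sumr.
have -> : \sum_(i <- L') gv v0 * (i.1 *: PA i.2) = \sum_(i <- L') i.1 *: PA i.2.
  apply: eq_bigr => i _; by rewrite -scalerAr (PPl AmulA gs Aidem A3a).
apply.
  move=> i Hi e He; move: (allP HallL i Hi) => /allP H; by rewrite H.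
move=> U HU; rewrite cats0 => Hok.
case: (boolP (all (tr U) (ext a b [::]))) => Hab; last first.
  rewrite big_seq_cond; apply: big1 => i /andP [Hi _].
  have := allP Hext i Hi => /allP Hs.
  case: ifP => // Hall; case/negP: Hab; apply/allP => e He.
  by move/allP: Hall; apply; apply: Hs.
case E: L' => [|i0 L0]; first by rewrite big_nil.
have Hi0 : i0 \in L' by rewrite E mem_head.
have [y [Hy HyF]] := realize HC Hsrc (undup_uniq _) HU (proj1 Hok) (proj2 Hok).
have HabF : forall e, e \in ext a b [::] -> e \in F /\ tr U e.
  move=> e He; split; last exact: (allP Hab).
  move: (allP HallL i0 Hi0) => /allP; apply; exact: (allP (allP Hext i0 Hi0)).
have Ha : forall e, a = Some e -> Re G S B e y.
  move=> e Ea; have [H1 H2] := HabF e (mem_exta b Ea); by apply/(HyF e H1).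
have Hb : forall f, b = Some f -> Re G S B f y.
  move=> f Eb; have [H1 H2] := HabF f (mem_extb a Eb); by apply/(HyF f H1).
have Hx := Xsp_xpt Hy Ha.
have := pi_sum (delta K (xpt B b y)) Hx.
move=> Hps; apply: (etrans _ Hps).
rewrite -E /L' big_map big_filter big_mkcond.
have Hall2 : all (fun cw => ~~ nilp cw.2 && ((kk cw == k) ==> all (fun e => e \in F) (ext a b (Qof (nfoG cw.2))))) p.
  move: (all_predI (fun cw : K * seq (gen V Ed) => ~~ nilp cw.2)
    (fun cw => (kk cw == k) ==> all (fun e => e \in F) (ext a b (Qof (nfoG cw.2)))) p) => /= ->.
  by rewrite Hallp andbT; exact: Hnc.
apply: eq_big_all Hall2 _ => cw /andP [Hn Hq].
have W := wf_nfo Hn; move: Hq W; rewrite /k.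
case: (nfoG cw.2) => [|w|a' Q b'] Hq W.
- by rewrite /= mulr0.
- by rewrite (evalT_NI K HC b Hy Ha W) mulr0.
rewrite (evalT K HC Hsrc Hrinj Hloop Q a' b' Hy Ha Hb) keyE.
case: (eqVneq a' a) => [Ea|]; last by rewrite /= mulr0.
case: (eqVneq b' b) => [Eb|]; last by rewrite /= mulr0.
subst a' b'; rewrite /= eqxx /= in Hq; rewrite /= all_ext Hab /=.
have -> : all (tr U) Q = allchi G S B Q y.
  apply: eq_in_all => e He.
  have HeF : e \in F by apply: (allP Hq); apply: mem_extQ.
  case: (chi_cases (Re G S B e) y) => [[H ->]|[H ->]]; first by apply/(HyF e HeF).
  by apply/negbTE/negP => Ht; apply: H; apply/(HyF e HeF).
by case: (allchi G S B Q y); rewrite ?mulr1 ?mulr0.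
Qed.

Lemma main_zero : interp_poly gv ge gs p = 0.
Proof.
rewrite /interp_poly.
rewrite (eq_big_all (F2 := fun cw : K * seq (gen V Ed) => cw.1 *: IA (nfoG cw.2)) Hnc); last first.
  by move=> cw Hn; rewrite prod_IA.
apply: (@group_sum (K * seq (gen V Ed)) _ A (fun cw => kk cw) (fun cw => cw.1 *: IA (nfoG cw.2)) (size p) p (leqnn _)).
case=> [[w|[a b]]|].
- exact: cornerI.
- exact: cornerT.
- exact: cornerZ.
Qed.
End Main.


End P5.
Import P5.

Theorem theorem4p3
  (V Ed Cl : countType) (G : sepgraph V Ed Cl) (S : Cl -> Prop)
  (K : fieldType) (B : bdata V Ed Cl) :
  is_sepgraph G ->
  (forall Y, S Y -> fin_block G Y) ->
  (exists v0 : V, forall e, src G e = v0) ->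
  (forall e f, rng G e = rng G f -> e = f) ->
  (forall e, rng G e <> src G e) ->
  is_construction G S B ->
  forall p : ncpoly K V Ed, no_const_term p ->
    pi_zero G S B p -> zero_in_AL G S p.
Proof.
move=> HG Hfin [v0 Hsrc] Hrinj Hloop HC p Hnc Hpi A gv ge gs HM.
exact: (main_zero HG Hfin Hsrc Hrinj Hloop HC Hnc Hpi HM).
Qed.
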